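(* Let $G,H$ be graphs (connected or not, each with at least one vertex), and write $a=\widetilde\iota(G)$, $b=\widetilde\iota(H)$. Then $$\iota(G+H)=\begin{cases}\dfrac{ab-1}{a+b-2}, & a,b<\infty,\ a+b\neq2,\\[2mm] 1, & a=b=1,\\ \infty, & a+b=2,\ (a,b)\neq(1,1),\\ b, & a=\infty,\ b<\infty,\\ a, & b=\infty,\ a<\infty,\\ \infty, & a=b=\infty.\end{cases}$$
   Context: For a connected graph $G$ on vertices $v_1,\dots,v_n$, its distance matrix is $D=(d(v_i,v_j))_{i,j=1}^n$, where $d$ is the shortest-path distance; $\vec 1$ denotes the all-ones vector. $G$ is distance exceptional if $D\vec x=\vec 1$ has no solution. Curvature index $\iota(G)\in\mathbb{R}\cup\{\infty\}$ of a connected graph: if $D\vec x=\vec1$ has no solution or has a solution with $\vec 1^\top\vec x\neq0$, then $\iota(G)$ is the unique real number with $\{D\vec x:\vec 1^\top\vec x=1\}\cap\mathbb{R}\vec 1=\{\iota(G)\vec 1\}$; otherwise (solutions exist and all have $\vec 1^\top\vec x=0$) $\iota(G)=\infty$. The join $G+H$ is obtained from the disjoint union of $G$ and $H$ by adding all edges between $V(G)$ and $V(H)$. For a graph $G$ (possibly disconnected) on $n$ vertices, $\widetilde D(G)\in\mathbb{R}^{n\times n}$ is the principal submatrix indexed by $V(G)$ of the distance matrix of the cone $G+\mathsf{K}_1$; i.e. $\widetilde D(G)_{uv}=0$ if $u=v$, $1$ if $u\sim v$, and $2$ otherwise. The modified curvature index $\widetilde\iota(G)\in\mathbb{R}\cup\{\infty\}$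 is defined exactly as $\iota$ with $D$ replaced by $\widetilde D(G)$: if $\widetilde D(G)\vec x=\vec 1$ has no solution or has a solution with $\vec1^\top\vec x\ne0$, then $\widetilde\iota(G)$ is the unique real with $\{\widetilde D(G)\vec x:\vec1^\top\vec x=1\}\cap\mathbb{R}\vec1=\{\widetilde\iota(G)\vec1\}$; otherwise $\widetilde\iota(G)=\infty$. *)

(* Defs.v *)
From HB Require Import structures.
From mathcomp Require Import all_boot all_order all_algebra.
Set Implicit Arguments. Unset Strict Implicit. Unset Printing Implicit Defensive.
Import Order.TTheory GRing.Theory Num.Theory.
Local Open Scope ring_scope.

Definition simple_graph (V : finType) (e : rel V) : Prop :=
  symmetric e /\ irreflexive e.

Fixpoint reach (V : finType) (e : rel V) (n : nat) (x y : V) : bool :=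
  match n with
  | 0 => x == y
  | n'.+1 => reach e n' x y || [exists z, reach e n' x z && e z y]
  end.

(* Shortest-path distance: the least n with a walk of length <= n from x to y
   (meaningful for connected graphs, where it is always < #|V|). *)
Definition sp_dist (V : finType) (e : rel V) (x y : V) : nat :=
  find (fun n => reach e n x y) (iota 0 #|V|).

Definition dist_mx (R : numDomainType) (V : finType) (e : rel V) : V -> V -> R :=
  fun u v => (sp_dist e u v)%:R.

(* Modified distance matrix: distance matrix of the cone G + K_1 restricted to V(G). *)
Definition dtilde_mx (R : numDomainType) (V : finType) (e : rel V) : V -> V -> R :=
  fun u v => if u == v then 0 else if e u v then 1 else 2.

Definition join_rel (V1 V2 : finType) (e1 : rel V1) (e2 : rel V2)
  : rel (V1 + V2)%type :=
  fun u v => match u, v with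
             | inl a, inl b => e1 a b
             | inr a, inr b => e2 a b
             | _, _ => true
             end.

Definition mxv (R : numDomainType) (V : finType) (D : V -> V -> R) (x : V -> R)
  : V -> R := fun u => \sum_(v : V) D u v * x v.

(* curv_index D c : c (None = infinity) is the curvature index of the
   matrix D, exactly as in the definition of iota. *)
Definition curv_cond (R : numDomainType) (V : finType) (D : V -> V -> R) : Prop :=
  (~ exists x : V -> R, forall u, mxv D x u = 1) \/
  (exists x : V -> R, (forall u, mxv D x u = 1) /\ \sum_(v : V) x v != 0).

Definition curv_index (R : numDomainType) (V : finType) (D : V -> V -> R)
  (c : option R) : Prop :=
  (curv_cond D ->
     exists r : R, c = Some r /\
       (forall s : R, (exists x : V -> R, \sum_(v : V) x v = 1 /\
                          forall u, mxv D x u = s) <-> s = r)) /\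
  (~ curv_cond D -> c = None).

Definition join_formula (R : numFieldType) (a b : option R) : option R :=
  match a, b with
  | Some a, Some b =>
      if a + b != 2 then Some ((a * b - 1) / (a + b - 2))
      else if (a == 1) && (b == 1) then Some 1 else None
  | None, Some b => Some b
  | Some a, None => Some a
  | None, None => None
  end.

(* Main.v *)
Require Import Defs.
From mathcomp Require Import all_boot all_order all_algebra.
From mathcomp Require Import ring lra.
From Stdlib Require Import Classical.
Import Order.TTheory GRing.Theory Num.Theory.
Set Implicit Arguments. Unset Strict Implicit. Unset Printing Implicit Defensive.
Local Open Scope ring_scope.

Definition TT (R : numDomainType) (V : finType) (M : V -> V -> R) (p t : R) : Prop :=
  exists x : V -> R, \sum_(v : V) x v = p /\ forall u, mxv M x u = t.

Lemma TT_lin (R : numDomainType) (V : finType) (M : V -> V -> R) p1 t1 p2 t2 c1 c2 :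
  TT M p1 t1 -> TT M p2 t2 -> TT M (c1 * p1 + c2 * p2) (c1 * t1 + c2 * t2).
Proof.
move=> [x1 [s1 h1]] [x2 [s2 h2]].
exists (fun v => c1 * x1 v + c2 * x2 v); split.
  by rewrite big_split /= -!mulr_sumr s1 s2.
move=> u; rewrite /mxv.
under eq_bigr => v _ do rewrite mulrDr !mulrA [M u v * c1]mulrC [M u v * c2]mulrC -!mulrA.
rewrite big_split /= -!mulr_sumr.
by have := h1 u; have := h2 u; rewrite /mxv => -> ->.
Qed.

Lemma TT_scale (R : numDomainType) (V : finType) (M : V -> V -> R) p t c :
  TT M p t -> TT M (c * p) (c * t).
Proof. move=> h; have := TT_lin c 0 h h; by rewrite !mul0r !addr0. Qed.

Lemma TT_add (R : numDomainType) (V : finType) (M : V -> V -> R) p1 t1 p2 t2 :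
  TT M p1 t1 -> TT M p2 t2 -> TT M (p1 + p2) (t1 + t2).
Proof. move=> h1 h2; have := TT_lin 1 1 h1 h2; by rewrite !mul1r. Qed.

Lemma hyp_some (R : realFieldType) (V : finType) (M : V -> V -> R) al :
  curv_index M (Some al) -> forall p t, TT M p t <-> t = al * p.
Proof.
move=> [h1 h2].
have hc : curv_cond M.
  by apply: NNPP => hn; have := h2 hn.
have [r [[<-] hS]] := h1 hc.
have hT : forall s, TT M 1 s <-> s = al by move=> s; exact: hS.
have h1a : TT M 1 al by apply/hT.
move=> p t; split.
  move=> hpt; apply: NNPP => hne.
  have h0 : TT M 0 (t - al * p).
    have := TT_lin 1 (- p) hpt h1a.
    have -> : 1 * p + - p * 1 = 0 by ring.
    by have -> : 1 * t + - p * al = t - al * p by ring.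
  have hd : t - al * p != 0 by rewrite subr_eq0; apply/eqP.
  have h01 : TT M 0 1.
    have := TT_scale (t - al * p)^-1 h0; by rewrite mulr0 mulVf.
  have := TT_add h1a h01; rewrite addr0 => /hT /eqP.
  by rewrite -subr_eq0 addrAC subrr add0r oner_eq0.
move=> ->; have := TT_scale p h1a; by rewrite mulr1 mulrC.
Qed.

Lemma hyp_none (R : realFieldType) (V : finType) (M : V -> V -> R) :
  curv_index M None -> forall p t, TT M p t <-> p = 0.
Proof.
move=> [h1 h2].
have hc : ~ curv_cond M.
  by move=> hc; have [r [? _]] := h1 hc.
have [ex nz] : (exists x : V -> R, forall u, mxv M x u = 1) /\
     (forall x : V -> R, (forall u, mxv M x u = 1) -> \sum_(v : V) x v = 0).
  split.
    by apply: NNPP => hn; apply: hc; left.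
  move=> x hx; apply: NNPP => hn; apply: hc; right; exists x; split=> //.
  by apply/eqP.
have h01 : TT M 0 1.
  by have [x hx] := ex; exists x; split=> //; exact: nz.
move=> p t; split.
  move=> hpt; have := TT_lin 1 (1 - t) hpt h01.
  have -> : 1 * p + (1 - t) * 0 = p by ring.
  have -> : 1 * t + (1 - t) * 1 = 1 by ring.
  by move=> [x [<- hx]]; exact: nz.
by move=> ->; have := TT_scale t h01; rewrite mulr0 mulr1.
Qed.

Lemma concl_some (R : realFieldType) (V : finType) (M : V -> V -> R) r :
  (forall s, TT M 1 s <-> s = r) -> curv_index M (Some r).
Proof.
move=> hS.
have hc : curv_cond M.
  have h1r : TT M 1 r by apply/hS.
  have [r0|rn0] := eqVneq r 0.
    left=> [[x hx]].
    have hx1 : TT M (\sum_v x v) 1 by exists x.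
    have := TT_lin (1 - \sum_v x v) 1 h1r hx1.
    rewrite r0 => h.
    have : TT M 1 1.
      move: h; have -> : (1 - \sum_v x v) * 1 + 1 * \sum_v x v = 1 by ring.
      have -> : (1 - \sum_v x v) * 0 + 1 * 1 = 1 by ring.
      by [].
    by move/hS; rewrite r0 => /eqP; rewrite oner_eq0.
  right; have [x [sx hx]] := TT_scale r^-1 h1r.
  exists x; split; first by move=> u; rewrite hx mulVf.
  by rewrite sx mulr1 invr_eq0.
split; first by move=> _; exists r; split=> // s; exact: hS.
by move=> hn; exfalso; exact: hn.
Qed.

Lemma concl_none (R : realFieldType) (V : finType) (M : V -> V -> R) :
  TT M 0 1 -> (forall P, TT M P 1 -> P = 0) -> curv_index M None.
Proof.
move=> h01 hP; split=> // hc; exfalso.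
case: hc.
  by apply; have [x [_ hx]] := h01; exists x.
move=> [x [hx /eqP]]; apply; apply: hP; by exists x.
Qed.

Lemma exE (W : finType) (e : rel W) u v : [exists z, (u == z) && e z v] = e u v.
Proof.
apply/existsP/idP.
  by move=> [z /andP [/eqP -> ->]].
by move=> h; exists u; rewrite eqxx h.
Qed.

Lemma reach1 (W : finType) (e : rel W) u v : reach e 1 u v = (u == v) || e u v.
Proof. by rewrite /= exE. Qed.

Lemma sp0 (W : finType) (e : rel W) u : (0 < #|W|)%N -> sp_dist e u u = 0%N.
Proof. by rewrite /sp_dist; case: #|W| => [|n] //= _; rewrite eqxx. Qed.

Lemma sp1 (W : finType) (e : rel W) u v : (1 < #|W|)%N -> u != v -> e u v ->
  sp_dist e u v = 1%N.
Proof.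
rewrite /sp_dist => + nuv euv; case: #|W| => [|[|n]] //= _.
by rewrite (negbTE nuv) /= exE euv.
Qed.

Lemma sp2 (W : finType) (e : rel W) u v : (2 < #|W|)%N -> u != v -> ~~ e u v ->
  reach e 2 u v -> sp_dist e u v = 2%N.
Proof.
rewrite /sp_dist => + nuv euv r2; case: #|W| => [|[|[|n]]] //= _.
rewrite (negbTE nuv) /= exE (negbTE euv) /=.
by move: r2; rewrite /= exE (negbTE nuv) (negbTE euv) /= => ->.
Qed.

Section J.
Variables (R : realFieldType) (V1 V2 : finType) (e1 : rel V1) (e2 : rel V2).
Hypotheses (n1 : (0 < #|V1|)%N) (n2 : (0 < #|V2|)%N).

Lemma dist_ll a b : dist_mx R (join_rel e1 e2) (inl a) (inl b) = dtilde_mx R e1 a b.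
Proof.
rewrite /dist_mx /dtilde_mx.
have hN : (0 < #|{: V1 + V2}|)%N by rewrite card_sum addn_gt0 n1.
have [->|nab] := eqVneq a b; first by rewrite sp0.
have nab' : inl a != inl b :> (V1 + V2)%type by [].
case E: (e1 a b).
  by rewrite sp1 // card_sum; case: #|V1| n1 => [|[|k]] //= _; rewrite addn_gt0 n2 orbT.
have [c _] := card_gt0P n2.
rewrite sp2 //.
- rewrite card_sum.
  have : (1 < #|V1|)%N by have := max_card [set a; b]; rewrite cards2 nab.
  move: n2; case: #|V2| => // k; case: #|V1| => [|[|j]] // *; rewrite addnS !addSn //.  
- by rewrite /= E.
- change (reach (join_rel e1 e2) 1 (inl a) (inl b) || [exists z, reach (join_rel e1 e2) 1 (inl a) z && join_rel e1 e2 z (inl b)]).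
  apply/orP; right; apply/existsP; exists (inr c).
  by rewrite reach1.
Qed.

Lemma dist_rr a b : dist_mx R (join_rel e1 e2) (inr a) (inr b) = dtilde_mx R e2 a b.
Proof.
rewrite /dist_mx /dtilde_mx.
have hN : (0 < #|{: V1 + V2}|)%N by rewrite card_sum addn_gt0 n1.
have [->|nab] := eqVneq a b; first by rewrite sp0.
have nab' : inr a != inr b :> (V1 + V2)%type by [].
case E: (e2 a b).
  by rewrite sp1 // card_sum; case: #|V2| n2 => [|[|k]] //= _; rewrite ?addn0 ?addn1 ?addnS // ltnS.
have [c _] := card_gt0P n1.
rewrite sp2 //.
- rewrite card_sum.
  have : (1 < #|V2|)%N by have := max_card [set a; b]; rewrite cards2 nab.
  move: n1; case: #|V1| => // k; case: #|V2| => [|[|j]] // *; rewrite !addnS !addSn //.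
- by rewrite /= E.
- change (reach (join_rel e1 e2) 1 (inr a) (inr b) || [exists z, reach (join_rel e1 e2) 1 (inr a) z && join_rel e1 e2 z (inr b)]).
  apply/orP; right; apply/existsP; exists (inl c).
  by rewrite reach1.
Qed.

Lemma card2 : (1 < #|{: V1 + V2}|)%N.
Proof. by rewrite card_sum; move: n1 n2; case: #|V1| => // k; case: #|V2| => // j; rewrite addnS. Qed.

Lemma dist_lr a b : dist_mx R (join_rel e1 e2) (inl a) (inr b) = 1.
Proof. by rewrite /dist_mx sp1 // card2. Qed.

Lemma dist_rl a b : dist_mx R (join_rel e1 e2) (inr a) (inl b) = 1.
Proof. by rewrite /dist_mx sp1 // card2. Qed.

Lemma mxv_l (z : V1 + V2 -> R) u :
  mxv (dist_mx R (join_rel e1 e2)) z (inl u) =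
  mxv (dtilde_mx R e1) (fun a => z (inl a)) u + \sum_(b : V2) z (inr b).
Proof.
rewrite /mxv big_sumType /=; congr (_ + _); apply: eq_bigr => v _.
  by rewrite dist_ll.
by rewrite dist_lr mul1r.
Qed.

Lemma mxv_r (z : V1 + V2 -> R) u :
  mxv (dist_mx R (join_rel e1 e2)) z (inr u) =
  \sum_(a : V1) z (inl a) + mxv (dtilde_mx R e2) (fun b => z (inr b)) u.
Proof.
rewrite /mxv big_sumType /=; congr (_ + _); apply: eq_bigr => v _.
  by rewrite dist_rl mul1r.
by rewrite dist_rr.
Qed.

Lemma TT_join P s :
  TT (dist_mx R (join_rel e1 e2)) P s <->
  exists p q, P = p + q /\ TT (dtilde_mx R e1) p (s - q) /\ TT (dtilde_mx R e2) q (s - p).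
Proof.
split.
  move=> [z [sz hz]].
  exists (\sum_(a : V1) z (inl a)), (\sum_(b : V2) z (inr b)); split.
    by rewrite -sz big_sumType.
  split.
    exists (fun a => z (inl a)); split=> // u.
    by rewrite -(hz (inl u)) mxv_l addrK.
  exists (fun b => z (inr b)); split=> // u.
  by rewrite -(hz (inr u)) mxv_r addrC addKr.
move=> [p [q [-> [[x [sx hx]] [y [sy hy]]]]]].
exists (fun w => match w with inl a => x a | inr b => y b end); split.
  by rewrite big_sumType /= sx sy.
case=> u.
  by rewrite mxv_l /= hx sy subrK.
by rewrite mxv_r /= hy sx addrC subrK.
Qed.
End J.

Theorem theorem3p7 (R : realFieldType) (V1 V2 : finType)
  (e1 : rel V1) (e2 : rel V2) (a b : option R) :
  simple_graph e1 -> simple_graph e2 ->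
  (0 < #|V1|)%N -> (0 < #|V2|)%N ->
  curv_index (dtilde_mx R e1) a ->
  curv_index (dtilde_mx R e2) b ->
  curv_index (dist_mx R (join_rel e1 e2)) (join_formula a b).
Proof.
move=> _ _ n1 n2.
case: a => [al|] ha; [have hA := hyp_some ha | have hA := hyp_none ha];
case: b => [be|] hb; [have hB := hyp_some hb | have hB := hyp_none hb | have hB := hyp_some hb | have hB := hyp_none hb]; rewrite /join_formula.
- have [e|ne] := eqVneq (al + be) 2; rewrite ?e ?ne /=.
  + have [/andP[/eqP a1 /eqP b1]|nab] := boolP ((al == 1) && (be == 1)).
      apply: concl_some => s; rewrite TT_join //; split.
        move=> [p [q [pq [/hA h1 /hB h2]]]]. rewrite a1 in h1. lra.
      move=> ->; exists 1, 0; rewrite hA hB a1 b1; split; first by rewrite addr0.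
      split; ring.
    have hbe : be = 2 - al by rewrite -e addrC addKr.
    have a1 : al != 1.
      apply/negP => /eqP a1; move/negP: nab; apply; rewrite hbe a1 eqxx /=.
      by apply/eqP; ring.
    have d : al - 1 != 0 by rewrite subr_eq0.
    apply: concl_none.
      apply/TT_join => //; exists (al-1)^-1, (-(al-1)^-1); rewrite hA hB; split; first by ring.
      by rewrite hbe; split; field.
    move=> P /TT_join [//|//|p [q [-> [/hA h1 /hB h2]]]].
    rewrite hbe in h2; apply: (mulfI d); rewrite mulr0.
    have -> : (al - 1) * (p + q) = al * p - (2 - al) * q - p + q by ring.
    by rewrite -h1 -h2; ring.
  + have d : al + be - 2 != 0 by rewrite subr_eq0.
    apply: concl_some => s; rewrite TT_join //; split.
      move=> [p [q [pq [/hA h1 /hB h2]]]].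
      apply: (mulIf d); rewrite divfK //.
      have E1 : s - q - al * p = 0 by rewrite h1 subrr.
      have E2 : s - p - be * q = 0 by rewrite h2 subrr.
      have E3 : p + q - 1 = 0 by rewrite -pq subrr.
      have : s * (al + be - 2) - (al * be - 1) = (be - 1) * (s - q - al * p) + (al - 1) * (s - p - be * q) + (al * be - 1) * (p + q - 1) by ring.
      by rewrite E1 E2 E3 !mulr0 !addr0 => /eqP; rewrite subr_eq0 => /eqP.
    move=> ->; exists ((be-1)/(al+be-2)), ((al-1)/(al+be-2)); rewrite hA hB.
    by split; [field | split; field].
- apply: concl_some => s; rewrite TT_join //; split.
    move=> [p [q [pq [/hA h1 /hB h2]]]].
    by move: h1 pq; rewrite h2 subr0 addr0 => -> <-; rewrite mulr1.
  move=> ->; exists 1, 0; rewrite hA hB; split; first by rewrite addr0.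
  by split; ring.
- apply: concl_some => s; rewrite TT_join //; split.
    move=> [p [q [pq [/hA h1 /hB h2]]]].
    by move: h2 pq; rewrite h1 subr0 add0r => -> <-; rewrite mulr1.
  move=> ->; exists 0, 1; rewrite hA hB; split; first by rewrite add0r.
  by split; ring.
- apply: concl_none.
    by apply/TT_join => //; exists 0, 0; rewrite hA hB; split=> //; rewrite addr0.
  by move=> P /TT_join [//|//|p [q [-> [/hA -> /hB ->]]]]; rewrite addr0.
Qed.
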